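(* Let $\mathcal{R}$ be a left-connected rewriting system over a signature $\Sigma$, let $L_1$ and $L_2$ be the left-hand sides of two rules of $\mathcal{R}$, and let $(g_1,g_2\colon G\to L_1+L_2)$ be a gluing scheme yielding a pre-critical pair, with gluing $\epsilon\colon L_1+L_2\twoheadrightarrow S=\mathtt{coeq}(g_1,g_2)$ and interface $in(S)+out(S)\xrightarrow{[\subseteq,\subseteq]}S$. This pre-critical pair is a critical pair if and only if some hyperedge of $L_1$ is glued to some hyperedge of $L_2$.
   Context: A signature $\Sigma$ is a set of triples $(x,n,m)$ (label, arity, coarity). A $\Sigma$-hypergraph $G=(V,E,s,t,l)$ has finite sets $V$ (nodes), $E$ (hyperedges), maps $s,t\colon E\to V^*$ (lists of sources/targets) and a labelling $l\colon E\to\Sigma$ sending a hyperedge with $n$ sources and $m$ targets to some $(x,n,m)$. Morphisms preserve sources, targets and labels; they form the category $\mathbf{Hyp}_\Sigma$, where colimits are computed componentwise and monos/epis are injective/surjective on nodes and hyperedges. Composition is written $f;g$; $\iota_1,\iota_2$ are coprojections. A hypergraph is discrete if it has no hyperedges. A path is a list of hyperedges $[e_1,\dots,e_n]$ with some target of $e_k$ equal to a source of $e_{k+1}$ for each $k$; it goes from $v$ to $v'$ if $v$ is a source of $e_1$ and $v'$ a target of $e_n$; a cycle is a path with some source of $e_1$ a target of $e_n$. In-degree (out-degree) of a node $v$: number of pairs $(e,i)$ with $v$ the $i$-th target (source) of $e$; $in(H)$, $out(H)$: nodes of in-degree $0$, out-degree $0$. $H$ is ma (monogamous acyclic) if it has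 no cycle and all in- and out-degrees are $\le 1$. A cospan $I\to H\leftarrow O$ with $I,O$ discrete is an ma-cospan if $H$ is ma and the legs are mono with images $in(H)$ and $out(H)$. $H$ is strongly connected if for all $x\in in(H)$, $y\in out(H)$ there is a path from $x$ to $y$. A left-connected rule is a span $L\xleftarrow{[i_L,o_L]}K=I+O\xrightarrow{[i_R,o_R]}R$ with $I,O$ discrete, $I\to L\leftarrow O$ and $I\to R\leftarrow O$ ma-cospans, $[i_L,o_L]$ mono and $L$ strongly connected; a left-connected rewriting system is a finite set of such rules. A convex match is a mono $m\colon L\to G$ such that every path in $G$ between two nodes of $m(L)$ has all its hyperedges in $m(L)$. A derivation between ma-cospans $n\to G\leftarrow m$ and $n\to H\leftarrow m$ via a rule $L\leftarrow K\to R$ is given by a convex match $L\to G$, a hypergraph $C$ and a diagram $G\leftarrow C\to H$, $K\to C$, $R\to H$, $n+m\to C$ in which $K,L,C,G$ and $K,R,C,H$ are pushout squares (the left one a boundary complement, automatic for left-connected systems) and everything commutes with the interfaces; for left-connected systems mono matches are automatically convex and pushout complements exist uniquely. A pre-critical pair consists of two derivations, via rules $L_1\leftarrow K_1\to R_1$ and $L_2\leftarrow K_2\to R_2$ with pushout complements $C_1,C_2$, from a common ma-cospan $n\to S\leftarrow m$ with matches $m_1,m_2$ such that $[m_1,m_2]\colon L_1+L_2\to S$ is epi. It is parallel if there exist $g_1\colon L_1\to C_2$ and $g_2\colon L_2\to C_1$ with $g_1$ followed by $C_2\to S$ equal to $m_1$ and $g_2$ followed by $C_1\to S$ equal to $m_2$;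 it is a critical pair if it is not parallel. A gluing scheme for $L_1,L_2$ is a $\Sigma$-hypergraph $G$ with morphisms $g_1,g_2\colon G\to L_1+L_2$; its gluing is the coequaliser $\epsilon\colon L_1+L_2\to S=\mathtt{coeq}(g_1,g_2)$. Two nodes (or hyperedges) $x,x'$ of $L_1+L_2$ are glued if some node (hyperedge) $y$ of $G$ has $g_1(y)=x$, $g_2(y)=x'$. The gluing scheme yields a pre-critical pair if $\iota_1;\epsilon$ and $\iota_2;\epsilon$ are mono and $in(S)\xrightarrow{\subseteq}S\xleftarrow{\subseteq}out(S)$ is an ma-cospan; the pre-critical pair is then formed by the (unique) derivations from this ma-cospan with matches $\iota_1;\epsilon$ and $\iota_2;\epsilon$. *)

(* Defs.v *)
From Stdlib Require List.
From mathcomp Require Import all_boot.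
Set Warnings "-notation-overridden".
Set Implicit Arguments. Unset Strict Implicit. Unset Printing Implicit Defensive.

Record signature := Signature {
  slabel :> Type; sar : slabel -> nat; scoar : slabel -> nat }.

Section Hyp.
Variable Sg : signature.

Record hypergraph := Hypergraph {
  hV : finType; hE : finType;
  hsrc : hE -> seq hV; htgt : hE -> seq hV; hlab : hE -> slabel Sg;
  hsrc_size : forall e, size (hsrc e) = sar (hlab e);
  htgt_size : forall e, size (htgt e) = scoar (hlab e) }.

Record hom (G H : hypergraph) := Hom {
  fV : hV G -> hV H; fE : hE G -> hE H;
  fsrc : forall e, hsrc (fE e) = map fV (hsrc e);
  ftgt : forall e, htgt (fE e) = map fV (htgt e);
  flab : forall e, hlab (fE e) = hlab e }.

Definition hcomp (A B C : hypergraph) (f : hom A B) (g : hom B C) : hom A C.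
Proof.
refine (@Hom A C (fun v => fV g (fV f v)) (fun e => fE g (fE f e)) _ _ _).
- by move=> e; rewrite fsrc fsrc -map_comp.
- by move=> e; rewrite ftgt ftgt -map_comp.
- by move=> e; rewrite !flab.
Defined.

Definition heq (A B : hypergraph) (f g : hom A B) :=
  (forall v, fV f v = fV g v) /\ (forall e, fE f e = fE g e).

Definition mono (A B : hypergraph) (f : hom A B) :=
  injective (fV f) /\ injective (fE f).
Definition epi (A B : hypergraph) (f : hom A B) :=
  (forall y, exists x, fV f x = y) /\ (forall y, exists x, fE f x = y).

Definition discrete (G : hypergraph) := #|hE G| = 0.

Definition hcoprod (G H : hypergraph) : hypergraph.
Proof.
refine (@Hypergraph (hV G + hV H)%type (hE G + hE H)%type
  (fun e => match e with inl e => map inl (hsrc e) | inr e => map inr (hsrc e) end)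
  (fun e => match e with inl e => map inl (htgt e) | inr e => map inr (htgt e) end)
  (fun e => match e with inl e => hlab e | inr e => hlab e end) _ _).
- by case=> e; rewrite size_map hsrc_size.
- by case=> e; rewrite size_map htgt_size.
Defined.

Definition inj1 (G H : hypergraph) : hom G (hcoprod G H).
Proof. by refine (@Hom G (hcoprod G H) inl inl _ _ _). Defined.
Definition inj2 (G H : hypergraph) : hom H (hcoprod G H).
Proof. by refine (@Hom H (hcoprod G H) inr inr _ _ _). Defined.

Definition copair (G H X : hypergraph) (f : hom G X) (g : hom H X) :
  hom (hcoprod G H) X.
Proof.
refine (@Hom (hcoprod G H) X
  (fun v => match v with inl v => fV f v | inr v => fV g v end)
  (fun e => match e with inl e => fE f e | inr e => fE g e end) _ _ _).
- by case=> e /=; rewrite fsrc -map_comp.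
- by case=> e /=; rewrite ftgt -map_comp.
- by case=> e /=; rewrite flab.
Defined.

Definition is_pushout (A B C D : hypergraph) (a : hom A B) (b : hom A C)
  (c : hom B D) (d : hom C D) :=
  heq (hcomp a c) (hcomp b d) /\
  forall (X : hypergraph) (x : hom B X) (y : hom C X),
    heq (hcomp a x) (hcomp b y) ->
    exists h : hom D X, [/\ heq (hcomp c h) x, heq (hcomp d h) y &
      forall h' : hom D X, heq (hcomp c h') x -> heq (hcomp d h') y -> heq h h'].

Definition is_coeq (G A S : hypergraph) (f g : hom G A) (e : hom A S) :=
  heq (hcomp f e) (hcomp g e) /\
  forall (X : hypergraph) (x : hom A X), heq (hcomp f x) (hcomp g x) ->
    exists h : hom S X, heq (hcomp e h) x /\
      forall h' : hom S X, heq (hcomp e h') x -> heq h h'.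

Definition indeg (G : hypergraph) (v : hV G) := (\sum_(e : hE G) count_mem v (htgt e))%N.
Definition outdeg (G : hypergraph) (v : hV G) := (\sum_(e : hE G) count_mem v (hsrc e))%N.

Definition linked (G : hypergraph) (e e' : hE G) := has (fun v => v \in hsrc e') (htgt e).

Definition path_from_to (G : hypergraph) (v v' : hV G) (e : hE G) (es : seq (hE G)) :=
  [&& path (@linked G) e es, v \in hsrc e & v' \in htgt (last e es)].

Definition has_cycle (G : hypergraph) :=
  exists (e : hE G) es, path (@linked G) e es && has (fun v => v \in hsrc e) (htgt (last e es)).

Definition ma (G : hypergraph) :=
  ~ has_cycle G /\ forall v : hV G, (indeg v <= 1)%N /\ (outdeg v <= 1)%N.

Definition ma_cospan (I H O : hypergraph) (i : hom I H) (o : hom O H) :=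
  discrete I /\ discrete O /\ ma H /\ mono i /\ mono o /\
      (forall v, indeg v = 0%N <-> exists x, fV i x = v) /\
      (forall v, outdeg v = 0%N <-> exists x, fV o x = v).

Definition strongly_connected (H : hypergraph) :=
  forall x y : hV H, indeg x = 0%N -> outdeg y = 0%N ->
    exists e es, path_from_to x y e es.

(* rules L <-[iL,oL]- I+O -[iR,oR]-> R *)
Record rule := Rule {
  rL : hypergraph; rR : hypergraph; rI : hypergraph; rO : hypergraph;
  riL : hom rI rL; roL : hom rO rL; riR : hom rI rR; roR : hom rO rR }.

Definition rK (r : rule) := hcoprod (rI r) (rO r).

Definition left_connected_rule (r : rule) :=
  discrete (rI r) /\ discrete (rO r) /\ ma_cospan (riL r) (roL r) /\
      ma_cospan (riR r) (roR r) /\ mono (copair (riL r) (roL r)) /\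
      strongly_connected (rL r).

Definition left_connected_system (Rs : seq rule) :=
  forall r, List.In r Rs -> left_connected_rule r.

Definition convex_match (L G : hypergraph) (m : hom L G) :=
  mono m /\
  forall (u w : hV L) (e : hE G) es, path_from_to (fV m u) (fV m w) e es ->
    forall x, x \in e :: es -> exists d, fE m d = x.

Record derivation (N G M : hypergraph) (i : hom N G) (o : hom M G)
   (r : rule) (m : hom (rL r) G) := Derivation {
  dC : hypergraph; dH : hypergraph;
  dk : hom (rK r) dC; dc : hom dC G;
  dr : hom (rR r) dH; dh : hom dC dH;
  dnm : hom (hcoprod N M) dC;
  diH : hom N dH; doH : hom M dH }.

Definition is_derivation (N G M : hypergraph) (i : hom N G) (o : hom M G)
   (r : rule) (m : hom (rL r) G) (D : derivation i o m) :=
  convex_match m /\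
      is_pushout (copair (riL r) (roL r)) (dk D) m (dc D) /\
      is_pushout (copair (riR r) (roR r)) (dk D) (dr D) (dh D) /\
      heq (hcomp (dnm D) (dc D)) (copair i o) /\
      heq (hcomp (dnm D) (dh D)) (copair (diH D) (doH D)) /\
      ma_cospan (diH D) (doH D).

Section Pairs.
Variables (N S M : hypergraph) (i : hom N S) (o : hom M S) (r1 r2 : rule).
Variables (m1 : hom (rL r1) S) (m2 : hom (rL r2) S).

Definition pre_critical_pair (D1 : derivation i o m1) (D2 : derivation i o m2) :=
  [/\ ma_cospan i o, is_derivation D1, is_derivation D2 & epi (copair m1 m2)].

Definition parallel (D1 : derivation i o m1) (D2 : derivation i o m2) :=
  exists (g1 : hom (rL r1) (dC D2)) (g2 : hom (rL r2) (dC D1)),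
    heq (hcomp g1 (dc D2)) m1 /\ heq (hcomp g2 (dc D1)) m2.

Definition critical_pair (D1 : derivation i o m1) (D2 : derivation i o m2) :=
  pre_critical_pair D1 D2 /\ ~ parallel D1 D2.
End Pairs.

Definition subdiscrete (S : hypergraph) (P : pred (hV S)) : hypergraph.
Proof.
refine (@Hypergraph {v : hV S | P v} void (fun e => match e with end)
  (fun e => match e with end) (fun e => match e with end) _ _); by case.
Defined.

Definition incl (S : hypergraph) (P : pred (hV S)) : hom (subdiscrete P) S.
Proof. by refine (@Hom (subdiscrete P) S val (fun e => match e with end) _ _ _); case. Defined.

Definition in_nodes (S : hypergraph) : pred (hV S) := fun v => indeg v == 0%N.
Definition out_nodes (S : hypergraph) : pred (hV S) := fun v => outdeg v == 0%N.

Definition glued_E (G A : hypergraph) (g1 g2 : hom G A) (x x' : hE A) :=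
  exists y, fE g1 y = x /\ fE g2 y = x'.

Definition yields_pre_critical (L1 L2 S : hypergraph)
  (eps : hom (hcoprod L1 L2) S) :=
  [/\ mono (hcomp (inj1 L1 L2) eps), mono (hcomp (inj2 L1 L2) eps) &
      ma_cospan (@incl S (@in_nodes S)) (@incl S (@out_nodes S))].

End Hyp.

(* Main.v *)
Require Import Defs.
From mathcomp Require Import all_boot.
From Stdlib Require Import Classical.
Set Implicit Arguments. Unset Strict Implicit. Unset Printing Implicit Defensive.

Section Aux.
Variable Sg : signature.

Lemma nodisc_edge (A : hypergraph Sg) : discrete A -> hE A -> False.
Proof. move=> H e. have := card0_eq H e. by rewrite inE. Qed.

Lemma sum_ge2 (T : finType) (F : T -> nat) e e' :
  e != e' -> 0 < F e -> 0 < F e' -> 1 < \sum_i F i.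
Proof.
move=> Hne H1 H2. rewrite (bigD1 e) //= (bigD1 e') /=; last by rewrite eq_sym Hne.
by rewrite addnA; apply: ltn_addr; exact: (leq_add H1 H2).
Qed.

Lemma sum_ge1 (T : finType) (F : T -> nat) e : F e <= \sum_i F i.
Proof. by rewrite (bigD1 e) //= leq_addr. Qed.

Lemma indeg_uniq (S : hypergraph Sg) (v : hV S) e e' :
  indeg v <= 1 -> v \in htgt e -> v \in htgt e' -> e = e'.
Proof.
move=> Hd He He'; apply/eqP; apply: contraLR Hd => Hne. rewrite -ltnNge.
by apply: (sum_ge2 Hne); rewrite -has_count has_pred1.
Qed.

Lemma outdeg_uniq (S : hypergraph Sg) (v : hV S) e e' :
  outdeg v <= 1 -> v \in hsrc e -> v \in hsrc e' -> e = e'.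
Proof.
move=> Hd He He'; apply/eqP; apply: contraLR Hd => Hne. rewrite -ltnNge.
by apply: (sum_ge2 Hne); rewrite -has_count has_pred1.
Qed.

Lemma indeg0 (S : hypergraph Sg) (v : hV S) e : indeg v = 0 -> v \notin htgt e.
Proof.
move=> H; apply/negP => He. have := sum_ge1 (fun e => count_mem v (htgt e)) e.
rewrite -/(indeg v) H leqn0 => /eqP/count_memPn; by rewrite He.
Qed.

Lemma outdeg0 (S : hypergraph Sg) (v : hV S) e : outdeg v = 0 -> v \notin hsrc e.
Proof.
move=> H; apply/negP => He. have := sum_ge1 (fun e => count_mem v (hsrc e)) e.
rewrite -/(outdeg v) H leqn0 => /eqP/count_memPn; by rewrite He.
Qed.

Lemma indeg_ne0 (S : hypergraph Sg) (v : hV S) : indeg v <> 0 -> exists e, v \in htgt e.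
Proof.
move=> H; apply: NNPP => Hn; apply: H; apply: big1 => e _.
apply/count_memPn; apply/negP => He; apply: Hn; by exists e.
Qed.

Lemma outdeg_ne0 (S : hypergraph Sg) (v : hV S) : outdeg v <> 0 -> exists e, v \in hsrc e.
Proof.
move=> H; apply: NNPP => Hn; apply: H; apply: big1 => e _.
apply/count_memPn; apply/negP => He; apply: Hn; by exists e.
Qed.

Lemma sc_noiso (L : hypergraph Sg) : strongly_connected L ->
  forall v : hV L, (exists e, v \in htgt e) \/ (exists e, v \in hsrc e).
Proof.
move=> Hsc v.
case: (classic (exists e, v \in htgt e)) => Ht; first by left.
case: (classic (exists e, v \in hsrc e)) => Hs; first by right.
have Hi : indeg v = 0.
  case: (eqVneq (indeg v) 0) => // /eqP H; by case: Ht; apply: indeg_ne0.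
have Ho : outdeg v = 0.
  case: (eqVneq (outdeg v) 0) => // /eqP H; by case: Hs; apply: outdeg_ne0.
have [e [es /and3P [_ He _]]] := Hsc v v Hi Ho.
by right; exists e.
Qed.

Definition tagS (S : hypergraph Sg) : hypergraph Sg.
Proof.
refine (@Hypergraph Sg (hV S) (hE S * bool)%type (fun e => hsrc e.1)
  (fun e => htgt e.1) (fun e => hlab e.1) _ _).
- by move=> e; apply: hsrc_size.
- by move=> e; apply: htgt_size.
Defined.

Definition tagh (A S : hypergraph Sg) (f : hom A S) (t : hE A -> bool) : hom A (tagS S).
Proof.
refine (@Hom Sg A (tagS S) (fV f) (fun e => (fE f e, t e)) _ _ _) => e /=;
  [exact: fsrc | exact: ftgt | exact: flab].
Defined.

Definition markS (S : hypergraph Sg) (P : pred (hV S)) : hypergraph Sg.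
Proof.
refine (@Hypergraph Sg (hV S * bool)%type (hE S * bool)%type
  (fun e => map (fun v => (v, P v || e.2)) (hsrc e.1))
  (fun e => map (fun v => (v, P v || e.2)) (htgt e.1))
  (fun e => hlab e.1) _ _).
- by move=> e; rewrite size_map hsrc_size.
- by move=> e; rewrite size_map htgt_size.
Defined.

Definition markh (S : hypergraph Sg) (P : pred (hV S)) (Q : pred (hE S))
  (HQ : forall e v, Q e -> (v \in hsrc e) || (v \in htgt e) -> P v) (b : bool) :
  hom S (markS P).
Proof.
refine (@Hom Sg S (markS P) (fun v => (v, P v || b)) (fun e => (e, Q e || b)) _ _ _).
- move=> e /=; apply/eq_in_map => v Hv /=; case Qe: (Q e) => //=.
  by rewrite (HQ e v Qe) ?Hv.
- move=> e /=; apply/eq_in_map => v Hv /=; case Qe: (Q e) => //=.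
  by rewrite (HQ e v Qe) ?Hv ?orbT.
- by [].
Defined.

Lemma mark_all (S : hypergraph Sg) (P : pred (hV S)) (Q : pred (hE S)) HQ
  (cond : hom S (markS P) -> Prop) :
  (exists h, forall h', cond h' -> heq h h') ->
  cond (@markh S P Q HQ true) -> cond (@markh S P Q HQ false) ->
  (forall v, P v) /\ (forall e, Q e).
Proof.
move=> [h Hh] H1 H0; have [A1 B1] := Hh _ H1; have [A0 B0] := Hh _ H0.
split=> x.
- by move: (A1 x); rewrite A0 /= orbT orbF => -[].
- by move: (B1 x); rewrite B0 /= orbT orbF => -[].
Qed.

Lemma coeq_epi (G A S : hypergraph Sg) (f g : hom G A) (e : hom A S) :
  is_coeq f g e -> epi e.
Proof.
move=> [Hc Hu].
pose P := fun v : hV S => [exists x, fV e x == v].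
pose Q := fun y : hE S => [exists x, fE e x == y].
have HQ : forall y v, Q y -> (v \in hsrc y) || (v \in htgt y) -> P v.
  move=> y v /existsP [x /eqP <-]; rewrite fsrc ftgt => /orP [] /mapP [w _ ->];
  apply/existsP; by exists w.
have Hx : heq (hcomp f (hcomp e (markh HQ true))) (hcomp g (hcomp e (markh HQ true))).
  by split=> x /=; [move: (Hc.1 x) | move: (Hc.2 x)] => /= ->.
have [h [_ Hh]] := Hu _ _ Hx.
have H0 : heq (hcomp e (markh HQ false)) (hcomp e (markh HQ true)).
  split=> x /=.
  - have -> : P (fV e x) by apply/existsP; exists x.
    by [].
  - have -> : Q (fE e x) by apply/existsP; exists x.
    by [].
have [HP HQQ] := @mark_all S P Q HQ (fun h' => heq (hcomp e h') (hcomp e (markh HQ true)))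
  (ex_intro _ h Hh) (conj (fun _ => erefl) (fun _ => erefl)) H0.
split=> y.
- by move: (HP y) => /existsP [x /eqP <-]; exists x.
- by move: (HQQ y) => /existsP [x /eqP <-]; exists x.
Qed.


Lemma po_jointly (A B C D : hypergraph Sg) (a : hom A B) (b : hom A C)
  (c : hom B D) (d : hom C D) : is_pushout a b c d ->
  (forall v, (exists x, fV c x = v) \/ (exists x, fV d x = v)) /\
  (forall e, (exists x, fE c x = e) \/ (exists x, fE d x = e)).
Proof.
move=> [Hc Hu].
pose P := fun v : hV D => [exists x, fV c x == v] || [exists x, fV d x == v].
pose Q := fun y : hE D => [exists x, fE c x == y] || [exists x, fE d x == y].
have HQ : forall y v, Q y -> (v \in hsrc y) || (v \in htgt y) -> P v.
  move=> y v /orP [] /existsP [x /eqP <-]; rewrite fsrc ftgt => /orP [] /mapP [w _ ->];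
  apply/orP; [left|left|right|right]; apply/existsP; by exists w.
have Hx : heq (hcomp a (hcomp c (markh HQ true))) (hcomp b (hcomp d (markh HQ true))).
  by split=> x /=; [move: (Hc.1 x) | move: (Hc.2 x)] => /= ->.
have [h [_ _ Hh]] := Hu _ _ _ Hx.
have H0 : heq (hcomp c (markh HQ false)) (hcomp c (markh HQ true)) /\
          heq (hcomp d (markh HQ false)) (hcomp d (markh HQ true)).
  split; split=> x /=.
  - have -> : P (fV c x) by apply/orP; left; apply/existsP; exists x.
    by [].
  - have -> : Q (fE c x) by apply/orP; left; apply/existsP; exists x.
    by [].
  - have -> : P (fV d x) by apply/orP; right; apply/existsP; exists x.
    by [].
  - have -> : Q (fE d x) by apply/orP; right; apply/existsP; exists x.
    by [].
have [HP HQQ] := @mark_all D P Q HQ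
  (fun h' => heq (hcomp c h') (hcomp c (markh HQ true)) /\
             heq (hcomp d h') (hcomp d (markh HQ true)))
  (ex_intro _ h (fun h' H => Hh h' (proj1 H) (proj2 H)))
  (conj (conj (fun _ => erefl) (fun _ => erefl)) (conj (fun _ => erefl) (fun _ => erefl))) H0.
split=> y.
- by case/orP: (HP y) => /existsP [x /eqP <-]; [left|right]; exists x.
- by case/orP: (HQQ y) => /existsP [x /eqP <-]; [left|right]; exists x.
Qed.

Section PoX.
Variables (A B C : hypergraph Sg) (a : hom A B) (b : hom A C).
Definition pxV (v : hV B) : (hV C + hV B)%type :=
  match [pick k | fV a k == v] with Some k => inl (fV b k) | None => inr v end.
Definition poX : hypergraph Sg.
Proof.
refine (@Hypergraph Sg (hV C + hV B)%type (hE C + hE B)%type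
  (fun e => match e with inl e => map inl (hsrc e) | inr e => map pxV (hsrc e) end)
  (fun e => match e with inl e => map inl (htgt e) | inr e => map pxV (htgt e) end)
  (fun e => match e with inl e => hlab e | inr e => hlab e end) _ _);
  by case=> e; rewrite size_map ?hsrc_size ?htgt_size.
Defined.
Definition poy : hom C poX.
Proof. by refine (@Hom Sg C poX inl inl _ _ _). Defined.
Definition pox : hom B poX.
Proof. by refine (@Hom Sg B poX pxV inr _ _ _). Defined.
End PoX.

Lemma po_mono (A B C D : hypergraph Sg) (a : hom A B) (b : hom A C)
  (c : hom B D) (d : hom C D) : is_pushout a b c d ->
  injective (fV a) -> (hE A -> False) -> mono d.
Proof.
move=> [Hc Hu] Ha HA.
have Hx : heq (hcomp a (pox a b)) (hcomp b (poy a b)).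
  split=> x /=; last by case: (HA x).
  rewrite /pxV; case: pickP => [k /eqP Hk|H]; first by rewrite (Ha _ _ Hk).
  by have := H x; rewrite eqxx.
have [h [_ [Hd1 Hd2] _]] := Hu _ _ _ Hx.
split=> x y Hxy.
- have := Hd1 x; have := Hd1 y; rewrite /= Hxy => -> []; by [].
- have := Hd2 x; have := Hd2 y; rewrite /= Hxy => -> []; by [].
Qed.


Lemma rK_noedge (r : rule Sg) : left_connected_rule r -> hE (rK r) -> False.
Proof. move=> [HI [HO _]] [e|e]; [exact: nodisc_edge HI e | exact: nodisc_edge HO e]. Qed.

Lemma into_complement (r : rule Sg) (S : hypergraph Sg) (m : hom (rL r) S)
  (C : hypergraph Sg) (k : hom (rK r) C) (c : hom C S) (L' : hypergraph Sg)
  (m' : hom L' S) :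
  left_connected_rule r -> is_pushout (copair (riL r) (roL r)) k m c ->
  (forall s : hV S, indeg s <= 1 /\ outdeg s <= 1) ->
  (forall v : hV L', (exists e, v \in htgt e) \/ (exists e, v \in hsrc e)) ->
  (forall e' e, fE m' e' <> fE m e) ->
  exists g : hom L' C, heq (hcomp g c) m'.
Proof.
move=> Hr Hpo Hdeg Hiso Hne.
have Hr' := Hr.
move: Hr' => [HI [HO [Hcl [_ [Hmono _]]]]].
move: Hcl => [_ [_ [_ [_ [_ [Hin Hout]]]]]].
have [HcV HcE] := po_mono Hpo Hmono.1 (rK_noedge Hr).
have [JV JE] := po_jointly Hpo.
have HgV : forall v, exists x, fV c x = fV m' v.
  move=> v; case: (JV (fV m' v)) => [[w Hw]|//].
  case: (classic (exists k0, fV (copair (riL r) (roL r)) k0 = w)) => [[k0 Hk0]|Hnk].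
    exists (fV k k0); move: (Hpo.1.1 k0) => /= <-.
    by move: Hk0 => /= ->.
  have Hi : indeg w <> 0.
    by move=> /Hin [x Hx]; apply: Hnk; exists (inl x).
  have Ho : outdeg w <> 0.
    by move=> /Hout [x Hx]; apply: Hnk; exists (inr x).
  have [ei Hei] := indeg_ne0 Hi.
  have [eo Heo] := outdeg_ne0 Ho.
  case: (Hiso v) => [[e' He']|[e' He']]; exfalso.
  - apply: (Hne e' ei).
    apply: (indeg_uniq (v := fV m' v)); first exact: (Hdeg _).1.
    + by rewrite ftgt map_f.
    + by rewrite -Hw ftgt map_f.
  - apply: (Hne e' eo).
    apply: (outdeg_uniq (v := fV m' v)); first exact: (Hdeg _).2.
    + by rewrite fsrc map_f.
    + by rewrite -Hw fsrc map_f.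
have HgE : forall e, exists x, fE c x = fE m' e.
  move=> e; case: (JE (fE m' e)) => [[w Hw]|//].
  by exfalso; apply: (Hne e w).
have [gV HV] := fin_all_exists HgV.
have [gE HE] := fin_all_exists HgE.
have Hs : forall e, hsrc (gE e) = map gV (hsrc e).
  move=> e; apply: (inj_map HcV); rewrite -fsrc HE fsrc -map_comp.
  by apply: eq_map => v /=; rewrite HV.
have Ht : forall e, htgt (gE e) = map gV (htgt e).
  move=> e; apply: (inj_map HcV); rewrite -ftgt HE ftgt -map_comp.
  by apply: eq_map => v /=; rewrite HV.
have Hl : forall e, hlab (gE e) = hlab e.
  by move=> e; rewrite -(flab c (gE e)) HE flab.
by exists (Hom Hs Ht Hl); split=> x /=.
Qed.

End Aux.
Theorem mainTheorem5 (Sg : signature) (Rs : seq (rule Sg)) (r1 r2 : rule Sg)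
  (HRs : left_connected_system Rs) (Hr1 : List.In r1 Rs) (Hr2 : List.In r2 Rs)
  (G0 S : hypergraph Sg) (g1 g2 : hom G0 (hcoprod (rL r1) (rL r2)))
  (eps : hom (hcoprod (rL r1) (rL r2)) S)
  (Hcoeq : is_coeq g1 g2 eps)
  (Hpre : yields_pre_critical eps)
  (D1 : derivation (@incl Sg S (@in_nodes Sg S)) (@incl Sg S (@out_nodes Sg S))
          (hcomp (inj1 (rL r1) (rL r2)) eps))
  (D2 : derivation (@incl Sg S (@in_nodes Sg S)) (@incl Sg S (@out_nodes Sg S))
          (hcomp (inj2 (rL r1) (rL r2)) eps))
  (HD1 : is_derivation D1) (HD2 : is_derivation D2) :
  critical_pair D1 D2 <->
  exists (e1 : hE (rL r1)) (e2 : hE (rL r2)),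
    glued_E g1 g2 (inl e1) (inr e2) \/ glued_E g1 g2 (inr e2) (inl e1).
Proof.
have Hr1c := HRs _ Hr1; have Hr2c := HRs _ Hr2.
have [Hmo1 Hmo2 Hma] := Hpre.
have Hdeg : forall s : hV S, (indeg s <= 1)%N /\ (outdeg s <= 1)%N.
  by move: Hma => [_ [_ [[_ Hd] _]]].
have Hepi := coeq_epi Hcoeq.
have Hgl : forall e1 e2, glued_E g1 g2 e1 e2 -> fE eps e1 = fE eps e2.
  by move=> e1 e2 [y [H1 H2]]; move: (Hcoeq.1.2 y) => /=; rewrite H1 H2.
split.
- move=> [Hpc Hnp]. apply: NNPP => Hno. apply: Hnp.
  pose side := fun e : hE (hcoprod (rL r1) (rL r2)) => if e is inl _ then true else false.
  have Hside : forall y, side (fE g1 y) = side (fE g2 y).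
    move=> y; case E1: (fE g1 y) => [a1|b1]; case E2: (fE g2 y) => [a2|b2] //=;
    exfalso; apply: Hno.
    + by exists a1, b2; left; exists y.
    + by exists a2, b1; right; exists y.
  have Hx : heq (hcomp g1 (tagh eps side)) (hcomp g2 (tagh eps side)).
    split=> y /=; first by move: (Hcoeq.1.1 y) => /= ->.
    by move: (Hcoeq.1.2 y) => /= ->; rewrite Hside.
  have [h [[_ Hh] _]] := Hcoeq.2 _ _ Hx.
  have Hne : forall e1 e2, fE eps (inl e1) <> fE eps (inr e2).
    move=> e1 e2 He; have := Hh (inl e1); have := Hh (inr e2).
    by rewrite /= He => -> [].
  move: HD1 HD2 => [_ [Hpo1 _]] [_ [Hpo2 _]].
  have [g1' Hg1] := into_complement (m' := hcomp (inj1 _ _) eps) Hr2c Hpo2 Hdeg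
    (sc_noiso (proj2 (proj2 (proj2 (proj2 (proj2 Hr1c))))))
    (fun e' e => Hne e' e).
  have [g2' Hg2] := into_complement (m' := hcomp (inj2 _ _) eps) Hr1c Hpo1 Hdeg
    (sc_noiso (proj2 (proj2 (proj2 (proj2 (proj2 Hr2c))))))
    (fun e' e H => Hne e e' (esym H)).
  by exists g1', g2'.
- move=> [e1 [e2 Hg]].
  have Heq : fE eps (inl e1) = fE eps (inr e2).
    by case: Hg => /Hgl.
  split.
  + split => //; split.
    * move=> y; have [x Hx] := Hepi.1 y; by case: x Hx => x Hx; [exists (inl x)|exists (inr x)].
    * move=> y; have [x Hx] := Hepi.2 y; by case: x Hx => x Hx; [exists (inl x)|exists (inr x)].
  + move=> [g1' [g2' [H1 _]]].
    move: HD2 => [_ [[Hc2 Hu2] _]].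
    have Hx : heq (hcomp (copair (riL r2) (roL r2)) (tagh (hcomp (inj2 _ _) eps) (fun _ => true)))
                  (hcomp (dk D2) (tagh (dc D2) (fun _ => false))).
      split=> x /=; last by case: (rK_noedge Hr2c x).
      by move: (Hc2.1 x) => /= ->.
    have [h [[_ Hh1] [_ Hh2] _]] := Hu2 _ _ _ Hx.
    have := Hh1 e2; have := Hh2 (fE g1' e1).
    move: (H1.2 e1) => /= ->; rewrite Heq => -> [].
    by [].
Qed.
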